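(* In the privacy game, let $(\alpha^0,\beta^0)\in A\times B$ be arbitrary and let $\{(\alpha^k,\beta^k)\}_{k\in\mathbb{N}}$ be generated by the following best-response dynamics: for $k=1,2,\dots$, if $k$ is even, choose $\alpha^k\in\arg\min_{\alpha\in A}U(\alpha,\beta^{k-1})$ and set $\beta^k=\beta^{k-1}$; if $k$ is odd, choose $\beta^k\in\arg\min_{\beta\in B}V(\alpha^{k-1},\beta)$ and set $\alpha^k=\alpha^{k-1}$. Then for every $\epsilon>0$ there exists $K_\epsilon\in\mathbb{N}$ such that $(\alpha^k,\beta^k)\in\mathcal{N}_\epsilon$ for all $k\ge K_\epsilon$, where $\mathcal{N}_\epsilon=\{(\alpha,\beta)\in A\times B: U(\alpha,\beta)\le U(\alpha',\beta)+\epsilon\ \forall\alpha'\in A,\ V(\alpha,\beta)\le V(\alpha,\beta')+\epsilon\ \forall\beta'\in B\}$ is the set of $\epsilon$-Nash equilibria.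
   Context: Privacy game. $\mathcal{X},\mathcal{W},\mathcal{Y}$ are finite nonempty sets; $p$ is a joint probability mass function of $(X,Z,W)$ on $\mathcal{X}\times\mathcal{X}\times\mathcal{W}$; $d:\mathcal{X}\times\mathcal{X}\to\mathbb{R}_{\ge 0}$; $\varrho$ is a real constant (privacy ratio). Sender policies: $A=\{\alpha=(\alpha_{yzw}):\alpha_{yzw}\in[0,1],\ \sum_{y\in\mathcal{Y}}\alpha_{yzw}=1\ \forall (z,w)\in\mathcal{X}\times\mathcal{W}\}$, with $\alpha_{yzw}=\mathbb{P}\{Y=y\mid Z=z,W=w\}$. Receiver policies: $B=\{\beta=(\beta_{\hat x y}):\beta_{\hat x y}\in[0,1],\ \sum_{\hat x\in\mathcal{X}}\beta_{\hat x y}=1\ \forall y\in\mathcal{Y}\}$, with $\beta_{\hat x y}=\mathbb{P}\{\hat X=\hat x\mid Y=y\}$. Define $\xi(\alpha,\beta)=\sum_{x,\hat x\in\mathcal{X}}\sum_{y\in\mathcal{Y}}\sum_{z\in\mathcal{X}}\sum_{w\in\mathcal{W}}d(x,\hat x)\beta_{\hat x y}\alpha_{yzw}p(x,z,w)$ (the expected distortion $\mathbb{E}\{d(X,\hat X)\}$) and $\zeta(\alpha)=\sum_{y,w}P_{yw}\log\frac{P_{yw}}{P_y P_w}$ (with $0\log 0=0$), where $P_{yw}=\sum_{z,x}\alpha_{yzw}p(x,z,w)$, $P_y=\sum_{w}P_{yw}$, $P_w=\sum_{z,x}p(x,z,w)$ (the mutual information $I(Y;W)$). Sender cost $U(\alpha,\beta)=\xi(\alpha,\beta)+\varrho\zeta(\alpha)$;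 receiver cost $V(\alpha,\beta)=\xi(\alpha,\beta)$. *)

(* Defs.v *)
From HB Require Import structures.
From mathcomp Require Import all_boot all_order all_algebra.
From mathcomp Require Import reals exp.
Set Implicit Arguments. Unset Strict Implicit. Unset Printing Implicit Defensive.
Import Order.TTheory GRing.Theory Num.Theory.
Local Open Scope ring_scope.

Section PrivacyGame.
Variables (R : realType) (X W Y : finType).
(* joint pmf p(x,z,w) of (X,Z,W), distortion d, privacy ratio rho *)
Variables (p : X -> X -> W -> R) (d : X -> X -> R) (rho : R).

(* sender policy alpha y z w = P{Y=y | Z=z, W=w} *)
Definition sender_policy := Y -> X -> W -> R.
(* receiver policy beta xh y = P{Xhat = xh | Y = y} *)
Definition receiver_policy := X -> Y -> R.

Definition in_A (a : sender_policy) : Prop :=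
  (forall y z w, 0 <= a y z w <= 1) /\
  (forall z w, \sum_(y : Y) a y z w = 1).

Definition in_B (b : receiver_policy) : Prop :=
  (forall xh y, 0 <= b xh y <= 1) /\
  (forall y, \sum_(xh : X) b xh y = 1).

Definition xi (a : sender_policy) (b : receiver_policy) : R :=
  \sum_(x : X) \sum_(xh : X) \sum_(y : Y) \sum_(z : X) \sum_(w : W)
     d x xh * b xh y * a y z w * p x z w.

Definition P_yw (a : sender_policy) (y : Y) (w : W) : R :=
  \sum_(z : X) \sum_(x : X) a y z w * p x z w.
Definition P_y (a : sender_policy) (y : Y) : R := \sum_(w : W) P_yw a y w.
Definition P_w (w : W) : R := \sum_(z : X) \sum_(x : X) p x z w.

(* mutual information I(Y;W), with the convention 0 log 0 = 0 *)
Definition zeta (a : sender_policy) : R :=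
  \sum_(y : Y) \sum_(w : W)
    (if P_yw a y w == 0 then 0
     else P_yw a y w * ln (P_yw a y w / (P_y a y * P_w w))).

Definition U (a : sender_policy) (b : receiver_policy) : R := xi a b + rho * zeta a.
Definition V (a : sender_policy) (b : receiver_policy) : R := xi a b.

Definition eps_Nash (eps : R) (a : sender_policy) (b : receiver_policy) : Prop :=
  in_A a /\ in_B b /\
  (forall a', in_A a' -> U a b <= U a' b + eps) /\
  (forall b', in_B b' -> V a b <= V a b' + eps).

Definition best_response_dynamics (a : nat -> sender_policy)
    (b : nat -> receiver_policy) : Prop :=
  in_A (a 0%N) /\ in_B (b 0%N) /\
  forall k : nat, (1 <= k)%N ->
    if ~~ odd k then
      [/\ in_A (a k), (forall a', in_A a' -> U (a k) (b k.-1) <= U a' (b k.-1))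
        & b k = b k.-1]
    else
      [/\ in_B (b k), (forall b', in_B b' -> V (a k.-1) (b k) <= V (a k.-1) b')
        & a k = a k.-1].

End PrivacyGame.

(* Main.v *)
Require Import Defs.
From HB Require Import structures.
From mathcomp Require Import all_boot all_order all_algebra.
From mathcomp Require Import reals exp.
From mathcomp Require Import classical_sets lra.
Import Order.TTheory GRing.Theory Num.Theory.
Local Open Scope ring_scope.
Lemma eventually_small (R : realType) (phi : nat -> R) (L : R) :
  (forall k, phi k.+1 <= phi k) -> (forall k, L <= phi k) ->
  forall eps, 0 < eps -> exists K, forall k, (K <= k)%N -> phi k - phi k.+1 <= eps.
Proof.
move=> hmono hlb eps eps0.
have chain : forall K k, (K <= k)%N -> phi k <= phi K.
  move=> K k /subnK <-; elim: (k - K)%N => [|n IH] //.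
  by rewrite addSn; apply: le_trans (hmono _) IH.
pose E : set R := fun x => exists k, x = - phi k.
have hs : has_sup E.
  split; first by exists (- phi 0%N); exists 0%N.
  exists (- L) => x [k ->]; by rewrite lerN2.
have [e [K ->] hK] := sup_adherent eps0 hs.
exists K => k Kk.
have h1 : - phi k.+1 <= sup E by apply: sup_upper_bound => //; exists k.+1.
have h2 := chain K k Kk.
lra.
Qed.

Lemma term_bound (R : realType) (q py pw : R) :
  0 < q -> q <= py -> py <= 1 -> q <= pw -> pw <= 1 ->
  `|q * ln (q / (py * pw))| <= 1.
Proof.
move=> q0 qpy py1 qpw pw1.
have py0 : 0 < py by apply: lt_le_trans qpy.
have pw0 : 0 < pw by apply: lt_le_trans qpw.
have pp0 : 0 < py * pw by apply: mulr_gt0.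
have r0 : 0 < q / (py * pw) by apply: divr_gt0.
have hq1 : q <= q / (py * pw).
  have hpp : py * pw <= 1 by nra.
  rewrite ler_pdivlMr //; nra.
have hq2 : q / (py * pw) <= q^-1.
  rewrite ler_pdivrMr // mulrC ler_pdivlMr //; nra.
have l1 : ln q <= ln (q / (py * pw)) by rewrite ler_ln ?posrE.
have l2 : ln (q / (py * pw)) <= - ln q.
  by rewrite -lnV ?posrE // ler_ln ?posrE ?invr_gt0.
have l3 : ln (q^-1) < q^-1 by apply: ln_sublinear; rewrite invr_gt0.
rewrite lnV ?posrE // in l3.
have l4 : q * - ln q < 1.
  by rewrite -(mulfV (lt0r_neq0 q0)); rewrite ltr_pM2l.
rewrite normrM gtr0_norm //.
apply: le_trans (ltW l4); rewrite ler_pM2l //.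
by rewrite ler_norml l2 andbT opprK.
Qed.

Section Bounds.
Variables (R : realType) (X W Y : finType) (p : X -> X -> W -> R).
Hypothesis p_ge0 : forall x z w, 0 <= p x z w.
Hypothesis p_sum1 : \sum_(x : X) \sum_(z : X) \sum_(w : W) p x z w = 1.

Lemma sumW1 : \sum_(w : W) \sum_(z : X) \sum_(x : X) p x z w = 1.
Proof.
rewrite -p_sum1 exchange_big /=; under eq_bigr do rewrite exchange_big /=.
by rewrite exchange_big.
Qed.

Variable a : sender_policy R X W Y.
Hypothesis ha : in_A a.

Lemma Pyw_ge0 y w : 0 <= P_yw p a y w.
Proof.
case: ha => h1 _; apply: sumr_ge0 => z _; apply: sumr_ge0 => x _.
by apply: mulr_ge0 => //; case/andP: (h1 y z w).
Qed.

Lemma Pyw_le_Pw y w : P_yw p a y w <= P_w p w.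
Proof.
case: ha => h1 _; apply: ler_sum => z _; apply: ler_sum => x _.
by rewrite ler_piMl //; case/andP: (h1 y z w).
Qed.

Lemma Pw_le1 w : P_w p w <= 1.
Proof.
rewrite -sumW1 (bigD1 w) //= lerDl; apply: sumr_ge0 => w' _.
by apply: sumr_ge0 => z _; apply: sumr_ge0.
Qed.

Lemma Pyw_le_Py y w : P_yw p a y w <= P_y p a y.
Proof.
rewrite /P_y (bigD1 w) //= lerDl; apply: sumr_ge0 => w' _; exact: Pyw_ge0.
Qed.

Lemma Py_le1 y : P_y p a y <= 1.
Proof.
rewrite -sumW1; apply: ler_sum => w _; exact: Pyw_le_Pw.
Qed.

Lemma zeta_bound : `|zeta p a| <= \sum_(y : Y) \sum_(w : W) (1 : R).
Proof.
apply: le_trans (ler_norm_sum _ _ _) _; apply: ler_sum => y _.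
apply: le_trans (ler_norm_sum _ _ _) _; apply: ler_sum => w _.
case: eqP => [_|/eqP hne]; first by rewrite normr0.
have h0 := Pyw_ge0 y w.
apply: term_bound.
- by rewrite lt0r hne.
- exact: Pyw_le_Py.
- exact: Py_le1.
- exact: Pyw_le_Pw.
- exact: Pw_le1.
Qed.

End Bounds.

Theorem mainTheorem5 (R : realType) (X W Y : finType)
  (p : X -> X -> W -> R) (d : X -> X -> R) (rho : R)
  (hX : (0 < #|X|)%N) (hW : (0 < #|W|)%N) (hY : (0 < #|Y|)%N)
  (p_ge0 : forall x z w, 0 <= p x z w)
  (p_sum1 : \sum_(x : X) \sum_(z : X) \sum_(w : W) p x z w = 1)
  (d_ge0 : forall x xh, 0 <= d x xh)
  (a : nat -> sender_policy R X W Y) (b : nat -> receiver_policy R X Y) :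
  best_response_dynamics p d rho a b ->
  forall eps : R, 0 < eps ->
  exists K : nat, forall k : nat, (K <= k)%N -> eps_Nash p d rho eps (a k) (b k).
Proof.
move=> [hA0 [hB0 H]] eps eps0.
have inAB : forall k, in_A (a k) /\ in_B (b k).
  elim=> [|k [IHa IHb]]; first by [].
  have := H k.+1 isT; case: ifP => _ [h1 h2 h3]; rewrite h3; by split.
pose phi k := U p d rho (a k) (b k).
have mono : forall k, phi k.+1 <= phi k.
  move=> k; have [hAk hBk] := inAB k; rewrite /phi.
  have := H k.+1 isT; case: ifP => _ [h1 h2 h3] /=.
  - by rewrite h3; exact: h2.
  - by rewrite h3 /U lerD2r; exact: h2.
pose M := \sum_(y : Y) \sum_(w : W) (1 : R).
have lb : forall k, - (`|rho| * M) <= phi k.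
  move=> k; have [[hA1 _] [hB1 _]] := inAB k; rewrite /phi /U.
  have hx : 0 <= xi p d (a k) (b k).
    apply: sumr_ge0 => x _; apply: sumr_ge0 => xh _; apply: sumr_ge0 => y _.
    apply: sumr_ge0 => z _; apply: sumr_ge0 => w _.
    case/andP: (hA1 y z w) => ha0 _; case/andP: (hB1 xh y) => hb0 _.
    by apply: mulr_ge0 => //; apply: mulr_ge0 => //; apply: mulr_ge0.
  have hz : `|rho * zeta p (a k)| <= `|rho| * M.
    by rewrite normrM ler_wpM2l //; apply: zeta_bound => //; exact: (inAB k).1.
  have := ler_norm (- (rho * zeta p (a k))); rewrite normrN => hn.
  lra.
have [K0 hK0] := @eventually_small R phi _ mono lb eps eps0.
exists K0.+1 => k hk.
have hgap : phi k - phi k.+1 <= eps by apply: hK0; apply: ltnW.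
have hk1 : (1 <= k)%N by apply: leq_trans hk.
have [hAk hBk] := inAB k.
split; first by [].
split; first by [].
split.
- move=> a' ha'.
  have := H k.+1 isT; case: ifP => hodd [h1 h2 h3] /=.
  + rewrite /phi h3 in hgap; have := h2 a' ha'; lra.
  + have he : (~~ odd k) = true by apply/negbT; move: hodd; rewrite oddS negbK.
    have := H k hk1; rewrite he => -[h1' h2' h3'].
    have := h2' a' ha'; rewrite -h3'; lra.
- move=> b' hb'.
  have := H k.+1 isT; case: ifP => hodd [h1 h2 h3] /=.
  + have he : (~~ odd k) = false by move: hodd; rewrite oddS negbK => ->.
    have := H k hk1; rewrite he => -[h1' h2' h3'].
    have := h2' b' hb'; rewrite -h3'; lra.
  + rewrite /phi /U h3 in hgap; have := h2 b' hb'; rewrite /V in hgap *; lra.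
Qed.
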